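(* (i) For all $m,n,p,q>0$: $(n\otimes\mathcal{T}_m,=)\models\psi^q_p$ if and only if either $p+1<m$, or $p+1=m$ and $q\le n$. (ii) For all $m,n,p,q>0$: $(n\otimes\mathcal{T}_m,=)\models\rho^q_p$ if and only if $p+1=m$ and $n=q$. (iii) For all $m,p,q>0$: $(\omega\otimes\mathcal{T}_m,=)\models\psi^q_p$ if and only if $p<m$.
   Context: Intuitionistic mathematics (constructive reading of logical constants; Markov's Principle not assumed), with Brouwer's Continuity Principle as an axiom (for every $R\subseteq\mathcal{N}\times\omega$, if $\forall\alpha\exists n[\alpha Rn]$ then $\forall\alpha\exists m\exists n\forall\beta[\overline{\alpha}m\sqsubset\beta\rightarrow\beta Rn]$). $\mathcal{N}=\omega^\omega$; $\langle i\rangle\ast\delta$ is the sequence with first value $i$ followed by $\delta$. $\mathcal{T}_m:=\{\alpha\mid\forall i[\alpha(i)\le\alpha(i+1)<m]\}$. For a set $\mathcal{F}\subseteq\mathcal{N}$ and $n\in\omega$: $n\otimes\mathcal{F}:=\{\langle i\rangle\ast\delta\mid i<n,\delta\in\mathcal{F}\}$ and $\omega\otimes\mathcal{F}:=\{\langle i\rangle\ast\delta\mid i\in\omega,\delta\in\mathcal{F}\}$. Formulas (language with only $=$): $D_0(\mathsf{x}):=\forall\mathsf{y}[\mathsf{x}=\mathsf{y}\vee\neg(\mathsf{x}=\mathsf{y})]$; for $m>0$, $D_m(\mathsf{x}):=\bigwedge_{i<m}\neg D_i(\mathsf{x})\wedge\forall\mathsf{y}[\bigwedge_{i<m}\neg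 D_i(\mathsf{y})\rightarrow(\mathsf{x}=\mathsf{y}\vee\neg(\mathsf{x}=\mathsf{y}))]$; $AP(\mathsf{x},\mathsf{y}):=\forall\mathsf{z}[\neg(\mathsf{z}=\mathsf{x})\vee\neg(\mathsf{z}=\mathsf{y})]$. For $p,q>0$: $\psi^q_p:=\exists\mathsf{x}_0\dots\exists\mathsf{x}_{q-1}[\bigwedge_{i<j<q}AP(\mathsf{x}_i,\mathsf{x}_j)\wedge\bigwedge_{i<q}\bigwedge_{j<p}\neg D_j(\mathsf{x}_i)]$ and $\rho^q_p:=\exists\mathsf{x}_0\dots\exists\mathsf{x}_{q-1}[\bigwedge_{i<j<q}AP(\mathsf{x}_i,\mathsf{x}_j)\wedge\bigwedge_{i<q}\bigwedge_{j<p}\neg D_j(\mathsf{x}_i)\wedge\forall\mathsf{z}[\bigwedge_{j<p}\neg D_j(\mathsf{z})\rightarrow\bigvee_{i<q}\mathsf{z}=\mathsf{x}_i]]$. Satisfaction is read intuitionistically with $=$ interpreted as equality of sequences. *)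

(* Defs.v *)
From Stdlib Require Import Arith.

Definition Baire := nat -> nat.

Definition eqN (a b : Baire) : Prop := forall i, a i = b i.

Definition consN (i : nat) (d : Baire) : Baire :=
  fun k => match k with 0 => i | S k' => d k' end.

(* Brouwer's Continuity Principle (taken as a hypothesis of the theorem). *)
Definition BrouwerCP : Prop :=
  forall R : Baire -> nat -> Prop,
    (forall a, exists n, R a n) ->
    forall a, exists m n, forall b, (forall i, i < m -> b i = a i) -> R b n.

Definition Tm (m : nat) (a : Baire) : Prop :=
  forall i, a i <= a (S i) /\ a (S i) < m.

Definition otimes (n : nat) (F : Baire -> Prop) (a : Baire) : Prop :=
  exists i d, i < n /\ F d /\ eqN a (consN i d).

Definition otimesw (F : Baire -> Prop) (a : Baire) : Prop :=
  exists i d, F d /\ eqN a (consN i d).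

Section Formulas.
(* The domain of the structure (X, =), as a predicate on Baire space;
   all quantifiers of the formulas range over D. *)
Variable D : Baire -> Prop.

Definition decEq (x y : Baire) : Prop := eqN x y \/ ~ eqN x y.

(* notDs m x  ==  /\_{i<m} ~ D_i(x) *)
Fixpoint notDs (m : nat) (x : Baire) : Prop :=
  match m with
  | 0 => True
  | S m' => notDs m' x /\
            ~ (notDs m' x /\ forall y, D y -> notDs m' y -> decEq x y)
  end.

(* D_m(x); for m = 0 this is  forall y, x = y \/ ~ x = y  (up to True /\ _). *)
Definition Dform (m : nat) (x : Baire) : Prop :=
  notDs m x /\ forall y, D y -> notDs m y -> decEq x y.

Definition AP (x y : Baire) : Prop :=
  forall z, D z -> ~ eqN z x \/ ~ eqN z y.

Definition psi (q p : nat) : Prop :=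
  exists x : nat -> Baire,
    (forall i, i < q -> D (x i)) /\
    (forall i j, i < j -> j < q -> AP (x i) (x j)) /\
    (forall i, i < q -> notDs p (x i)).

Definition rho (q p : nat) : Prop :=
  exists x : nat -> Baire,
    (forall i, i < q -> D (x i)) /\
    (forall i j, i < j -> j < q -> AP (x i) (x j)) /\
    (forall i, i < q -> notDs p (x i)) /\
    (forall z, D z -> notDs p z -> exists i, i < q /\ eqN z (x i)).
End Formulas.

Lemma notDs_S D m x : notDs D (S m) x = (notDs D m x /\ ~ Dform D m x).
Proof. reflexivity. Qed.

(* Main.v *)
Require Import Defs.
From Stdlib Require Import Arith Lia.

Definition Acond (m j : nat) (x : Baire) : Prop := forall k, x (S k) + j < m.

Definition good (D : Baire -> Prop) (m : nat) : Prop :=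
  (forall x, D x -> Tm m (fun k => x (S k))) /\
  (forall x d, D x -> Tm m d -> D (consN (x 0) d)).

Lemma Tm_mono m d : Tm m d -> forall i j, i <= j -> d i <= d j.
Proof. intros H i j Hij. induction Hij as [|j' Hij IH]; [lia|]. specialize (H j'). lia. Qed.

Lemma Tm_lt m d : Tm m d -> forall i, d i < m.
Proof. intros H i; destruct i as [|i]; [specialize (H 0)|specialize (H i)]; lia. Qed.

Lemma prefix_dec (f g : Baire) N :
  (forall l, l <= N -> f l = g l) \/ (exists l, l <= N /\ f l <> g l).
Proof.
  induction N as [|N IHN].
  - destruct (Nat.eq_dec (f 0) (g 0)) as [e|e].
    + left; intros l Hl. replace l with 0 by lia. auto.
    + right; exists 0; split; auto.
  - destruct IHN as [H|H].
    + destruct (Nat.eq_dec (f (S N)) (g (S N))) as [e|e].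
      * left; intros l Hl. destruct (Nat.eq_dec l (S N)); subst; auto. apply H; lia.
      * right; exists (S N); auto.
    + right; destruct H as [l [? ?]]; exists l; split; auto; lia.
Qed.

Fixpoint maxpref (a : Baire) (k : nat) : nat :=
  match k with 0 => a 1 | S k' => Nat.max (maxpref a k') (a (S (S k'))) end.
Definition G (c : nat) (a : Baire) : Baire := fun k => Nat.min (maxpref a k) c.

Lemma maxpref_ge a k : a (S k) <= maxpref a k.
Proof. destruct k; simpl; lia. Qed.

Lemma maxpref_eq a : (forall i, a (S i) <= a (S (S i))) -> forall k, maxpref a k = a (S k).
Proof. intros H k; induction k; simpl; auto. rewrite IHk. specialize (H k). lia. Qed.

Lemma Tm_G m c a : c < m -> Tm m (G c a).
Proof. intros Hc i. unfold G. simpl. lia. Qed.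

Lemma key (BCP : BrouwerCP) D m (HD : good D m) :
  forall j x, D x -> (notDs D j x <-> Acond m j x).
Proof.
  destruct HD as [HD1 HD2].
  induction j as [|j IH]; intros x Hx.
  - simpl. split; intros _; [|exact I]. intros k. rewrite Nat.add_0_r.
    exact (Tm_lt _ _ (HD1 x Hx) k).
  - rewrite notDs_S. split.
    + intros [Hn Hnd]. assert (HA := proj1 (IH x Hx) Hn). intros k.
      destruct (Nat.lt_ge_cases (x (S k) + S j) m) as [Hlt|Hge]; [exact Hlt|exfalso].
      apply Hnd. unfold Dform. split; [exact Hn|]. intros y Hy Hny.
      assert (HAy := proj1 (IH y Hy) Hny).
      destruct (prefix_dec x y (S k)) as [Heq|[l [Hl Hne]]].
      * left. intros l. destruct (le_lt_dec l (S k)) as [Hle|Hlt]. apply Heq; auto.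
        destruct l as [|l]; [lia|].
        pose proof (Tm_mono _ _ (HD1 x Hx) k l ltac:(lia)) as Mx. cbn beta in Mx.
        pose proof (Tm_mono _ _ (HD1 y Hy) k l ltac:(lia)) as My. cbn beta in My.
        pose proof (HA l). pose proof (HAy l). pose proof (HA k).
        specialize (Heq (S k) (le_n _)). lia.
      * right. intros E. apply Hne. apply E.
    + intros HA1. assert (HA : Acond m j x) by (intro k; specialize (HA1 k); lia).
      split; [apply (proj2 (IH x Hx)); exact HA|].
      intros [_ H].
      assert (Hjm : S j < m) by (specialize (HA1 0); lia).
      pose (c := m - 1 - j).
      pose (F := fun a => consN (x 0) (G c a)).
      assert (HTG : forall a, Tm m (G c a)) by (intro a; apply Tm_G; unfold c; lia).
      assert (HF : forall a, D (F a)) by (intro a; apply HD2; auto).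
      assert (HFn : forall a, notDs D j (F a)).
      { intro a. apply (proj2 (IH _ (HF a))). intro k. unfold F; cbn [consN]. unfold G, c. lia. }
      assert (Htot : forall a, exists b, (b = 0 /\ eqN (F a) x) \/ (b = 1 /\ ~ eqN (F a) x)).
      { intro a. destruct (H (F a) (HF a) (HFn a)) as [E|NE].
        - exists 0; left; split; auto; intro i; symmetry; apply E.
        - exists 1; right; split; auto; intro E; apply NE; intro i; symmetry; apply E. }
      destruct (BCP _ Htot x) as [M [b Hb]].
      assert (HFx : eqN (F x) x).
      { intros [|k]; [reflexivity|]. unfold F; cbn [consN]. unfold G.
        rewrite maxpref_eq. specialize (HA1 k). unfold c. lia.
        intro i. exact (proj1 (HD1 x Hx i)). }
      destruct (Hb x (fun i _ => eq_refl)) as [[Hb0 _]|[_ NE]]; [|exact (NE HFx)].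
      subst b.
      pose (beta := fun l => if l <? M then x l else c).
      destruct (Hb beta) as [[_ E]|[Hb1 _]]; [| |discriminate].
      * intros i Hi. unfold beta. rewrite (proj2 (Nat.ltb_lt _ _) Hi). reflexivity.
      * specialize (E (S M)). unfold F in E; cbn [consN] in E. unfold G in E.
        pose proof (maxpref_ge beta M) as Hg.
        assert (Hbe : beta (S M) = c) by (unfold beta; rewrite (proj2 (Nat.ltb_ge _ _)); lia).
        rewrite Hbe in Hg. specialize (HA1 M). unfold c in *. lia.
Qed.
Lemma good_otimes n m : good (otimes n (Tm m)) m.
Proof.
  split.
  - intros x [i [d [Hi [Hd E]]]]; red; intro k. rewrite (E (S k)), (E (S (S k))). cbn. apply Hd.
  - intros x d [i [d' [Hi [Hd E]]]] Htd. exists (x 0), d. rewrite (E 0). cbn.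
    split; [exact Hi|split; [exact Htd|intro; reflexivity]].
Qed.

Lemma good_otimesw m : good (otimesw (Tm m)) m.
Proof.
  split.
  - intros x [i [d [Hd E]]]; red; intro k. rewrite (E (S k)), (E (S (S k))). cbn. apply Hd.
  - intros x d _ Htd. exists (x 0), d. split; auto. intro; reflexivity.
Qed.

Lemma AP_diff D x y k : x k <> y k -> AP D x y.
Proof.
  intros H z _. destruct (Nat.eq_dec (z k) (x k)) as [e|e].
  - right; intro E. apply H. rewrite <- e. apply E.
  - left; intro E. apply e. apply E.
Qed.

Lemma AP_neq D x y : D x -> AP D x y -> ~ eqN x y.
Proof.
  intros Hx H E. destruct (H x Hx) as [N|N]; apply N; [intro; reflexivity|exact E].
Qed.

Lemma inj_le : forall N q (f : nat -> nat), (forall k, k < N -> f k < q) ->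
  (forall k k', k < N -> k' < N -> f k = f k' -> k = k') -> N <= q.
Proof.
  induction N as [|N IH]; intros q f Hr Hi; [lia|].
  pose (g := fun k => if f k <? f N then f k else f k - 1).
  assert (N <= q - 1).
  { apply (IH _ g).
    - intros k Hk. unfold g. assert (f k <> f N) by (intro E; specialize (Hi k N ltac:(lia) ltac:(lia) E); lia).
      pose proof (Hr k ltac:(lia)). pose proof (Hr N ltac:(lia)).
      destruct (Nat.ltb_spec (f k) (f N)); lia.
    - intros k k' Hk Hk' E. unfold g in E.
      assert (f k <> f N) by (intro E'; specialize (Hi k N ltac:(lia) ltac:(lia) E'); lia).
      assert (f k' <> f N) by (intro E'; specialize (Hi k' N ltac:(lia) ltac:(lia) E'); lia).
      apply Hi; try lia.
      destruct (Nat.ltb_spec (f k) (f N)); destruct (Nat.ltb_spec (f k') (f N)); lia. }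
  pose proof (Hr N ltac:(lia)). lia.
Qed.

Lemma fin_choice (R : nat -> nat -> Prop) N :
  (forall k, k < N -> exists i, R k i) -> exists f, forall k, k < N -> R k (f k).
Proof.
  induction N as [|N IH]; intros H.
  - exists (fun _ => 0); intros; lia.
  - destruct IH as [f Hf]; [intros; apply H; lia|].
    destruct (H N ltac:(lia)) as [i Hi].
    exists (fun k => if k =? N then i else f k). intros k Hk.
    destruct (Nat.eqb_spec k N); [subst; auto|]. apply Hf; lia.
Qed.

Definition step (i : nat) : Baire := fun k => if k <? i then 0 else 1.

Lemma Tm_step m i : 1 < m -> Tm m (step i).
Proof. intros Hm k. unfold step. destruct (Nat.ltb_spec k i); destruct (Nat.ltb_spec (S k) i); lia. Qed.

Lemma step_le i k : step i k <= 1.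
Proof. unfold step. destruct (k <? i); lia. Qed.

Lemma step_diff k k' : k < k' -> step k k <> step k' k.
Proof. intros H. unfold step. rewrite Nat.ltb_irrefl. rewrite (proj2 (Nat.ltb_lt _ _) H). lia. Qed.

Definition zero : Baire := fun _ => 0.

Lemma Tm_zero m : 0 < m -> Tm m zero.
Proof. intros H k. unfold zero. lia. Qed.

Lemma mem_otimes n m i d : i < n -> Tm m d -> otimes n (Tm m) (consN i d).
Proof. intros. exists i, d. split; [assumption|split; [assumption|intro; reflexivity]]. Qed.

Lemma otimes_fst n m x : otimes n (Tm m) x -> x 0 < n.
Proof. intros [i [d [Hi [_ E]]]]. rewrite (E 0). exact Hi. Qed.

Lemma zero_eq m p x : p + 1 = m -> Acond m p x -> eqN x (consN (x 0) zero).
Proof. intros Hp H [|k]; [reflexivity|]. specialize (H k). cbn. unfold zero. lia. Qed.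

Section Main.
Variable BCP : BrouwerCP.

Lemma part1 m n p q : 0 < m -> 0 < n -> 0 < p -> 0 < q ->
     (psi (otimes n (Tm m)) q p <-> (p + 1 < m \/ (p + 1 = m /\ q <= n))).
Proof.
  intros Hm Hn Hp Hq. pose proof (key BCP _ _ (good_otimes n m)) as K.
  split.
  - intros [x [Hd [Hap Hnd]]].
    assert (H0 := proj1 (K p (x 0) (Hd 0 Hq)) (Hnd 0 Hq) 0).
    destruct (lt_dec (p + 1) m) as [l|l]; [left; exact l|right; split; [lia|]].
    apply (inj_le q n (fun i => x i 0)).
    + intros k Hk. exact (otimes_fst _ _ _ (Hd k Hk)).
    + intros k k' Hk Hk' E.
      assert (Ek := zero_eq m p (x k) ltac:(lia) (proj1 (K _ _ (Hd k Hk)) (Hnd k Hk))).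
      assert (Ek' := zero_eq m p (x k') ltac:(lia) (proj1 (K _ _ (Hd k' Hk')) (Hnd k' Hk'))).
      assert (EE : eqN (x k) (x k')).
      { intro i. rewrite (Ek i), (Ek' i). cbn in E. rewrite E. reflexivity. }
      destruct (lt_eq_lt_dec k k') as [[c|c]|c]; auto; exfalso.
      * exact (AP_neq _ _ _ (Hd k Hk) (Hap k k' c Hk') EE).
      * apply (AP_neq _ _ _ (Hd k' Hk') (Hap k' k c Hk)). intro i; symmetry; apply EE.
  - intros [Hl|[Hl Hqn]].
    + exists (fun i => consN 0 (step i)). split; [|split].
      * intros i Hi. apply mem_otimes; auto. apply Tm_step; lia.
      * intros i j Hij Hj. apply (AP_diff _ _ _ (S i)). cbn. apply step_diff; auto.
      * intros i Hi. apply (proj2 (K _ _ (mem_otimes _ _ _ _ Hn (Tm_step m i ltac:(lia))))).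
        intro k. cbn. pose proof (step_le i k). lia.
    + exists (fun i => consN i zero). split; [|split].
      * intros i Hi. apply mem_otimes; [lia|]. apply Tm_zero; lia.
      * intros i j Hij Hj. apply (AP_diff _ _ _ 0). cbn. lia.
      * intros i Hi. apply (proj2 (K _ _ (mem_otimes n m i zero ltac:(lia) (Tm_zero m Hm)))).
        intro k. cbn. unfold zero. lia.
Qed.

Lemma part2 m n p q : 0 < m -> 0 < n -> 0 < p -> 0 < q ->
     (rho (otimes n (Tm m)) q p <-> (p + 1 = m /\ n = q)).
Proof.
  intros Hm Hn Hp Hq. pose proof (key BCP _ _ (good_otimes n m)) as K.
  split.
  - intros [x [Hd [Hap [Hnd Hc]]]].
    assert (Hpsi : psi (otimes n (Tm m)) q p) by (exists x; auto).
    destruct (proj1 (part1 m n p q Hm Hn Hp Hq) Hpsi) as [Hl|[Hl Hqn]].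
    + exfalso.
      assert (Hmem : forall k, otimes n (Tm m) (consN 0 (step k)))
        by (intro k; apply mem_otimes; auto; apply Tm_step; lia).
      destruct (fin_choice (fun k i => i < q /\ eqN (consN 0 (step k)) (x i)) (S q)) as [f Hf].
      { intros k Hk. apply Hc; [apply Hmem|]. apply (proj2 (K _ _ (Hmem k))).
        intro l. cbn. pose proof (step_le k l). lia. }
      assert (S q <= q); [|lia].
      apply (inj_le _ _ f). { intros k Hk. apply Hf; auto. }
      intros k k' Hk Hk' E.
      destruct (Hf k Hk) as [_ E1]. destruct (Hf k' Hk') as [_ E2].
      rewrite E in E1.
      destruct (lt_eq_lt_dec k k') as [[c|c]|c]; auto; exfalso.
      * apply (step_diff k k' c). specialize (E1 (S k)). specialize (E2 (S k)). cbn in *. congruence.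
      * apply (step_diff k' k c). specialize (E1 (S k')). specialize (E2 (S k')). cbn in *. congruence.
    + split; auto.
      destruct (fin_choice (fun k i => i < q /\ eqN (consN k zero) (x i)) n) as [f Hf].
      { intros k Hk. apply Hc; [apply mem_otimes; auto; apply Tm_zero; auto|].
        apply (proj2 (K _ _ (mem_otimes _ _ k _ Hk (Tm_zero m Hm)))).
        intro l. cbn. unfold zero. lia. }
      assert (n <= q); [|lia].
      apply (inj_le _ _ f). { intros k Hk. apply Hf; auto. }
      intros k k' Hk Hk' E.
      destruct (Hf k Hk) as [_ E1]. destruct (Hf k' Hk') as [_ E2].
      rewrite E in E1. specialize (E1 0). specialize (E2 0). cbn in *. congruence.
  - intros [Hl Hnq]. subst q.
    exists (fun i => consN i zero). split; [|split; [|split]].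
    + intros i Hi. apply mem_otimes; [lia|]. apply Tm_zero; lia.
    + intros i j Hij Hj. apply (AP_diff _ _ _ 0). cbn. lia.
    + intros i Hi. apply (proj2 (K _ _ (mem_otimes n m i zero ltac:(lia) (Tm_zero m Hm)))).
      intro k. cbn. unfold zero. lia.
    + intros z Hz Hnz. exists (z 0). split; [exact (otimes_fst _ _ _ Hz)|].
      exact (zero_eq m p z Hl (proj1 (K _ _ Hz) Hnz)).
Qed.

Lemma part3 m p q : 0 < m -> 0 < p -> 0 < q ->
     (psi (otimesw (Tm m)) q p <-> p < m).
Proof.
  intros Hm Hp Hq. pose proof (key BCP _ _ (good_otimesw m)) as K.
  assert (Hmem : forall i, otimesw (Tm m) (consN i zero))
    by (intro i; exists i, zero; split; [apply Tm_zero; auto|intro; reflexivity]).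
  split.
  - intros [x [Hd [Hap Hnd]]].
    pose proof (proj1 (K p (x 0) (Hd 0 Hq)) (Hnd 0 Hq) 0). lia.
  - intros Hl. exists (fun i => consN i zero). split; [|split].
    + intros i Hi. apply Hmem.
    + intros i j Hij Hj. apply (AP_diff _ _ _ 0). cbn. lia.
    + intros i Hi. apply (proj2 (K _ _ (Hmem i))). intro k. cbn. unfold zero. lia.
Qed.
End Main.

Theorem theorem8p2 (BCP : BrouwerCP) :
  (forall m n p q, 0 < m -> 0 < n -> 0 < p -> 0 < q ->
     (psi (otimes n (Tm m)) q p <-> (p + 1 < m \/ (p + 1 = m /\ q <= n)))) /\
  (forall m n p q, 0 < m -> 0 < n -> 0 < p -> 0 < q ->
     (rho (otimes n (Tm m)) q p <-> (p + 1 = m /\ n = q))) /\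
  (forall m p q, 0 < m -> 0 < p -> 0 < q ->
     (psi (otimesw (Tm m)) q p <-> p < m)).
Proof.
  split; [|split].
  - exact (part1 BCP).
  - exact (part2 BCP).
  - exact (part3 BCP).
Qed.
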